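(* Fix $\alpha\in(0,1)$, let $p=\frac{\alpha}{1+\alpha}$, and condition on $(\xi,|\widetilde\beta|)$ such that $\eta_{(1)}<-\log\alpha$. Let $q_1=\frac{1}{1+e^{\eta_{(1)}}}$. Then, conditionally, the number of rejections $R$ of any knockoff procedure at level $\alpha$ is stochastically smaller than $M_d^{p,q_1}$.
   Context: Whitening setup: $\Sigma\in\mathbb R^{d\times d}$ symmetric positive definite, $\beta\in\mathbb R^d$, $\sigma^2>0$, $\widehat\beta\sim\mathcal N_d(\beta,\sigma^2\Sigma)$; $\Delta$ diagonal with $\Delta\succeq\Sigma$; $\omega\sim\mathcal N_d(0,\sigma^2(\Delta-\Sigma))$ independent of $\widehat\beta$; $\widetilde\beta=\widehat\beta+\omega$; $\xi=\Sigma^{-1}\widehat\beta-\Delta^{-1}\widetilde\beta$. A knockoff procedure at level $\alpha$ (with this $\Delta$) is a rule that, as a function of $(\xi,|\widetilde\beta|)$ (possibly also of $\beta,\sigma^2$ and independent auxiliary randomness), outputs an ordering $[1],\dots,[d]$ and signs $\psi_j\in\{\pm1\}$; $\widetilde p_j=1/2$ if $\operatorname{sgn}(\widetilde\beta_j)=\psi_j$, else $1$; $\widehat{\mathrm{FDP}}_k=\frac{1+\#\{j\le k:\widetilde p_{[j]}=1\}}{\#\{j\le k:\widetilde p_{[j]}=1/2\}}$; $\hat k=\max\{k:\widehat{\mathrm{FDP}}_k\le\alpha\}$ ($0$ if none); rejections are the $H_{[j]}$, $j\le\hat k$, with $\widetilde p_{[j]}=1/2$; $R$ is their number. Log-odds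 $\eta_j=\frac{2|\widetilde\beta_j||\beta_j|}{\sigma^2\Delta_{jj}}$, with order statistics $\eta_{(1)}\ge\dots\ge\eta_{(d)}$. For $0<p<q<1$, the random walk $S_k^{p,q}=\sum_{j=1}^k(p-Z_j)$ with $Z_1,Z_2,\dots$ i.i.d. $\mathrm{Bernoulli}(q)$, and $M_d^{p,q}=\max\{k\le d:S_k^{p,q}\ge 1-p\}$ (taken to be $0$ if the set is empty). *)

(* Defs.v *)
From HB Require Import structures.
From mathcomp Require Import all_boot all_order all_algebra all_fingroup.
From mathcomp Require Import all_classical all_reals all_analysis.
Set Implicit Arguments. Unset Strict Implicit. Unset Printing Implicit Defensive.
Import Order.TTheory GRing.Theory Num.Theory.
Local Open Scope ring_scope.

Section KnockoffDefs.
Variable R : realType.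
Variable d : nat.

(* Conditional (on (xi, |beta~|)) law of the sign of beta~_j.
   With a := beta_j |beta~_j| / (sigma^2 Delta_jj), beta~_j is positive (true)
   with probability e^a/(e^a+e^-a) and negative (false) otherwise. *)
Definition sign_prob (a : R) (s : bool) : R :=
  (if s then expR a else expR (- a)) / (expR a + expR (- a)).

(* exponent a_j; b_j stands for |beta~_j| and Delta_j for Delta_jj *)
Definition sign_exponent (beta b Delta : 'I_d -> R) (sigma2 : R) (j : 'I_d) : R :=
  beta j * b j / (sigma2 * Delta j).

Definition P_signs (beta b Delta : 'I_d -> R) (sigma2 : R)
    (s : {ffun 'I_d -> bool}) : R :=
  \prod_(j < d) sign_prob (sign_exponent beta b Delta sigma2 j) (s j).

Definition eta (beta b Delta : 'I_d -> R) (sigma2 : R) (j : 'I_d) : R :=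
  2 * b j * `|beta j| / (sigma2 * Delta j).

(* eta_(1) = largest log-odds (0 if d = 0; all eta_j >= 0) *)
Definition eta_max (beta b Delta : 'I_d -> R) (sigma2 : R) : R :=
  \big[Num.max/0]_(j < d) eta beta b Delta sigma2 j.

(* Knockoff filter.  The ordering [1],...,[d] is given by a permutation o:
   [i+1] = o i (0-indexed).  psi j = true means psi_j = +1.
   p~_[i+1] = 1/2 iff the sign of beta~_[i+1] equals psi_[i+1]. *)
Definition n_half (o : {perm 'I_d}) (psi s : {ffun 'I_d -> bool}) (k : nat) : nat :=
  #|[set i : 'I_d | (i < k)%N && (s (o i) == psi (o i))]|.
Definition n_one (o : {perm 'I_d}) (psi s : {ffun 'I_d -> bool}) (k : nat) : nat :=
  #|[set i : 'I_d | (i < k)%N && (s (o i) != psi (o i))]|.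

(* FDP^_k <= alpha, with the convention FDP^_k = +oo when the denominator is 0 *)
Definition fdp_le (alpha : R) o psi s (k : nat) : bool :=
  (1 + n_one o psi s k)%:R <= alpha * (n_half o psi s k)%:R.

Definition khat (alpha : R) o psi s : nat :=
  \max_(k < d.+1 | fdp_le alpha o psi s k) k.

Definition n_rej (alpha : R) o psi s : nat := n_half o psi s (khat alpha o psi s).

(* Random walk S_k^{p,q} = sum_{j<=k} (p - Z_j) for a Bernoulli path z *)
Definition walk (p : R) (z : {ffun 'I_d -> bool}) (k : nat) : R :=
  k%:R * p - (#|[set i : 'I_d | (i < k)%N && z i]|)%:R.

Definition Mwalk (p : R) (z : {ffun 'I_d -> bool}) : nat :=
  \max_(k < d.+1 | 1 - p <= walk p z k) k.

Definition P_bern (q : R) (z : {ffun 'I_d -> bool}) : R :=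
  \prod_(j < d) (if z j then q else 1 - q).

End KnockoffDefs.

(* Main.v *)
Require Import Defs.
From HB Require Import structures.
From mathcomp Require Import all_boot all_order all_algebra all_fingroup.
From mathcomp Require Import all_classical all_reals all_analysis.
From mathcomp Require Import ring lra.
Import Order.TTheory GRing.Theory Num.Theory.
Local Open Scope ring_scope.

Definition Pq (R : realType) (d : nat) (r : 'I_d -> R) (z : {ffun 'I_d -> bool}) : R :=
  \prod_(j < d) (if z j then r j else 1 - r j).

Definition tg (d : nat) (j0 : 'I_d) (z : {ffun 'I_d -> bool}) : {ffun 'I_d -> bool} :=
  [ffun j => if j == j0 then ~~ z j else z j].

Arguments Pq {R d}.
Arguments tg {d}.
Lemma tgK d j0 : involutive (@tg d j0).
Proof. by move=> z; apply/ffunP => j; rewrite !ffunE; case: eqP => // _; rewrite negbK. Qed.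

Lemma dom_step (R : realType) (d : nat) (f : {ffun 'I_d -> bool} -> bool)
   (r r' : 'I_d -> R) (j0 : 'I_d) :
  (forall z z' : {ffun 'I_d -> bool}, (forall i, z i ==> z' i) -> f z' -> f z) ->
  (forall j, 0 <= r j <= 1) -> (forall j, 0 <= r' j <= 1) ->
  (forall j, j != j0 -> r j = r' j) -> r' j0 <= r j0 ->
  \sum_(z | f z) Pq r z <= \sum_(z | f z) Pq r' z.
Proof.
move=> hf hr hr' heq hle.
rewrite (big_mkcond (fun z => f z)) [in X in _ <= X](big_mkcond (fun z => f z)).
rewrite (bigID (fun z : {ffun 'I_d -> bool} => z j0)) /= [in X in _ <= X](bigID (fun z : {ffun 'I_d -> bool} => z j0)) /=.
rewrite (reindex_inj (inv_inj (@tgK d j0))) /=.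
rewrite [in X in _ <= X](reindex_inj (inv_inj (@tgK d j0))) /=.
have tgj0 z : tg j0 z j0 = ~~ z j0 by rewrite ffunE eqxx.
under eq_bigl do rewrite tgj0.
under [in X in _ <= X]eq_bigl do rewrite tgj0.
rewrite -!big_split /=; apply: ler_sum => z hz.
have hmon : f (tg j0 z) ==> f z.
  apply/implyP; apply: hf => i; rewrite ffunE; case: eqP => [->|]; last by rewrite implybb.
  by rewrite (negbTE hz).
set Pi := \prod_(j | j != j0) (if z j then r j else 1 - r j).
have hPi : Pi = \prod_(j | j != j0) (if z j then r' j else 1 - r' j).
  by apply: eq_bigr => j hj; rewrite heq.
have hPi' c : \prod_(j | j != j0) (if tg j0 z j then c j else 1 - c j)
    = \prod_(j | j != j0) (if z j then c j else 1 - c j).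
  by apply: eq_bigr => j hj; rewrite ffunE (negbTE hj).
have Pi0 : 0 <= Pi.
  apply: prodr_ge0 => j _; case: (z j); have := hr j; case/andP=> a b; lra.
have hD (c : 'I_d -> R) y : Pq c y = (if y j0 then c j0 else 1 - c j0) *
    \prod_(j | j != j0) (if y j then c j else 1 - c j) by rewrite /Pq (bigD1 j0).
rewrite !hD !hPi' -hPi tgj0 (negbTE hz) /=.
rewrite -/Pi.
move: hmon; case: (f z); case: (f (tg j0 z)) => //= _; nra.
Qed.

Lemma dom_all (R : realType) (d : nat) (f : {ffun 'I_d -> bool} -> bool)
   (r r' : 'I_d -> R) :
  (forall z z' : {ffun 'I_d -> bool}, (forall i, z i ==> z' i) -> f z' -> f z) ->
  (forall j, 0 <= r j <= 1) -> (forall j, 0 <= r' j <= 1) ->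
  (forall j, r' j <= r j) ->
  \sum_(z | f z) Pq r z <= \sum_(z | f z) Pq r' z.
Proof.
move=> hf hr hr' hle.
pose h (k : nat) (j : 'I_d) := if (j < k)%N then r' j else r j.
have hh k j : 0 <= h k j <= 1 by rewrite /h; case: ifP.
have ind k : (k <= d)%N -> \sum_(z | f z) Pq r z <= \sum_(z | f z) Pq (h k) z.
  elim: k => [_|k IH hk].
    by rewrite le_eqVlt; apply/orP; left; apply/eqP; apply: eq_bigr => z _; apply: eq_bigr => j _; rewrite /h.
  apply: le_trans (IH (ltnW hk)) _.
  apply: (@dom_step R d f _ _ (Ordinal hk)) => //.
    move=> j hj.
    have hjk : (j != k :> nat) by move: hj; apply: contra => /eqP e; apply/eqP/val_inj.
    by rewrite /h ltnS [(j <= k)%N]leq_eqVlt (negbTE hjk).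
  by rewrite /h /= ltnSn ltnn.
apply: le_trans (ind d (leqnn d)) _.
by rewrite le_eqVlt; apply/orP; left; apply/eqP; apply: eq_bigr => z _; apply: eq_bigr => j _; rewrite /h ltn_ord.
Qed.

Lemma card_ltk d k : (#|[set i : 'I_d | (i < k)%N]| <= k)%N.
Proof.
rewrite cardE -(size_map (@nat_of_ord d)) -[X in (_ <= X)%N](size_iota 0 k).
apply: uniq_leq_size; first by rewrite map_inj_uniq ?enum_uniq //; apply: val_inj.
by move=> x /mapP[i]; rewrite mem_enum inE => hi ->; rewrite mem_iota.
Qed.

Lemma nhalf_one_le d (o : {perm 'I_d}) psi s k :
  (n_half o psi s k + n_one o psi s k <= k)%N.
Proof.
rewrite /n_half /n_one.
have := cardsID [set i : 'I_d | s (o i) == psi (o i)] [set i : 'I_d | (i < k)%N].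
have -> : [set i : 'I_d | (i < k)%N] :&: [set i | s (o i) == psi (o i)] =
          [set i : 'I_d | (i < k)%N && (s (o i) == psi (o i))].
  by apply/setP => i; rewrite !inE.
have -> : [set i : 'I_d | (i < k)%N] :\: [set i | s (o i) == psi (o i)] =
          [set i : 'I_d | (i < k)%N && (s (o i) != psi (o i))].
  by apply/setP => i; rewrite !inE andbC.
move=> ->; exact: card_ltk.
Qed.

Definition Zs d (o : {perm 'I_d}) (psi s : {ffun 'I_d -> bool}) : {ffun 'I_d -> bool} :=
  [ffun i => s (o i) != psi (o i)].

Arguments Zs {d}.

Lemma fdp_walk (R : realType) (d : nat) (alpha : R) (o : {perm 'I_d}) (psi s : {ffun 'I_d -> bool}) (k : nat) :
  0 < alpha -> fdp_le alpha o psi s k ->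
  1 - alpha / (1 + alpha) <= walk (alpha / (1 + alpha)) (Zs o psi s) k.
Proof.
move=> ha; rewrite /fdp_le /walk.
have -> : #|[set i : 'I_d | (i < k)%N && Zs o psi s i]| = n_one o psi s k.
  by rewrite /n_one; apply: eq_card => i; rewrite !inE ffunE.
have hk := @nhalf_one_le d o psi s k.
move: (n_half o psi s k) (n_one o psi s k) hk => H V hk.
have hk' : H%:R + V%:R <= k%:R :> R by rewrite -natrD ler_nat.
rewrite natrD => h.
set p := alpha / (1 + alpha).
have h1 : 0 < 1 + alpha by lra.
have e : (k%:R * p - V%:R - (1 - p)) * (1 + alpha) = k%:R * alpha - V%:R * (1 + alpha) - 1.
  by rewrite /p; field; rewrite gt_eqF.
have hka : alpha * (H%:R + V%:R) <= alpha * k%:R by rewrite ler_wpM2l // ltW.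
have : 0 <= (k%:R * p - V%:R - (1 - p)) * (1 + alpha) by rewrite e; nra.
rewrite pmulr_lge0 //; lra.
Qed.

Lemma nrej_le (R : realType) (d : nat) (alpha : R) (o : {perm 'I_d})
  (psi s : {ffun 'I_d -> bool}) :
  0 < alpha -> (n_rej alpha o psi s <= Mwalk (alpha / (1 + alpha)) (Zs o psi s))%N.
Proof.
move=> ha; rewrite /n_rej.
apply: (@leq_trans (khat alpha o psi s)).
  have := @nhalf_one_le d o psi s (khat alpha o psi s); apply: leq_trans; exact: leq_addr.
apply/bigmax_leqP => k hk; apply: leq_bigmax_cond; exact: fdp_walk.
Qed.

Lemma Mwalk_mono (R : realType) (d : nat) (p : R) (z z' : {ffun 'I_d -> bool}) :
  (forall i, z i ==> z' i) -> (Mwalk p z' <= Mwalk p z)%N.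
Proof.
move=> hz; apply/bigmax_leqP => k hk; apply: leq_bigmax_cond.
apply: le_trans hk _; rewrite /walk lerB // ler_nat; apply: subset_leq_card.
apply/fintype.subsetP => i; rewrite !inE => /andP[-> zi] /=.
by have := hz i; rewrite zi.
Qed.

Lemma sign_prob_sum (R : realType) (a : R) : sign_prob a true + sign_prob a false = 1.
Proof.
rewrite /sign_prob -mulrDl divff // gt_eqF // addr_gt0 // expR_gt0 //.
Qed.

Arguments sign_prob_sum {R}.

Lemma sign_prob_ge (R : realType) (a m : R) (s : bool) :
  2 * `|a| <= m -> 1 / (1 + expR m) <= sign_prob a s.
Proof.
move=> hm.
have hE := expR_gt0 a; have hF := expR_gt0 (- a); have hM := expR_gt0 m.
have h1 : expR (- a) <= expR a * expR m.
  rewrite -expRD ler_expR; have := ler_norm a; have := ler_norm (- a); rewrite normrN; lra.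
have h2 : expR a <= expR (- a) * expR m.
  rewrite -expRD ler_expR; have := ler_norm a; have := ler_norm (- a); rewrite normrN; lra.
rewrite /sign_prob ler_pdivrMr ?addr_gt0 // mulrC mulrA ler_pdivlMr ?addr_gt0 //.
case: s; nra.
Qed.

Arguments sign_prob_ge {R}.

Lemma Zs_inj (d : nat) (o : {perm 'I_d}) psi : injective (Zs o psi).
Proof.
move=> s1 s2 e; apply/ffunP => j.
have := congr1 (fun z : {ffun 'I_d -> bool} => z ((o^-1)%g j)) e; rewrite /= !ffunE permKV.
by case: (s1 j); case: (s2 j); case: (psi j).
Qed.

Theorem proposition3 (R : realType) (d : nat) (alpha sigma2 : R)
    (beta b Delta : 'I_d -> R)
    (w : {perm 'I_d} * {ffun 'I_d -> bool} -> R) :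
  0 < alpha -> alpha < 1 ->
  0 < sigma2 ->
  (forall j, 0 < Delta j) ->
  (forall j, 0 <= b j) ->
  (forall x, 0 <= w x) -> \sum_x w x = 1 ->
  eta_max beta b Delta sigma2 < - ln alpha ->
  let p := alpha / (1 + alpha) in
  let q1 := 1 / (1 + expR (eta_max beta b Delta sigma2)) in
  forall t : nat,
    \sum_x w x *
      (\sum_(s : {ffun 'I_d -> bool} | (t <= n_rej alpha x.1 x.2 s)%N)
          P_signs beta b Delta sigma2 s)
    <= \sum_(z : {ffun 'I_d -> bool} | (t <= Mwalk p z)%N) P_bern q1 z.
Proof.
move=> ha ha1 hs hD hb hw hw1 heta p q1 t.
set B := (X in _ <= X).
pose a := sign_exponent beta b Delta sigma2.
have ha2 j : 2 * `|a j| <= eta_max beta b Delta sigma2.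
  have -> : 2 * `|a j| = Defs.eta beta b Delta sigma2 j.
    have hpos : 0 < sigma2 * Delta j by rewrite mulr_gt0.
    rewrite /a /sign_exponent /Defs.eta normf_div normrM (ger0_norm (hb j)) (gtr0_norm hpos).
    by ring.
  exact: le_bigmax.
have spge j s : q1 <= sign_prob (a j) s by exact: sign_prob_ge.
have q1ge : 0 <= q1 by rewrite /q1 divr_ge0 // addr_ge0 // ltW // expR_gt0.
have q1le : q1 <= 1.
  by rewrite /q1 ler_pdivrMr ?mul1r ?addr_gt0 ?expR_gt0 // lerDl ltW // expR_gt0.
have sple j s : sign_prob (a j) s <= 1.
  have := sign_prob_sum (a j); have := spge j true; have := spge j false.
  case: s; lra.
have key : forall x : {perm 'I_d} * {ffun 'I_d -> bool},
   \sum_(s : {ffun 'I_d -> bool} | (t <= n_rej alpha x.1 x.2 s)%N)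
          P_signs beta b Delta sigma2 s <= B.
  case=> o psi /=.
  pose qq i := sign_prob (a (o i)) (~~ psi (o i)).
  have hP s : 0 <= P_signs beta b Delta sigma2 s.
    by apply: prodr_ge0 => j _; apply: le_trans (spge j (s j)).
  apply: (@le_trans _ _ (\sum_(s | (t <= Mwalk p (Zs o psi s))%N) P_signs beta b Delta sigma2 s)).
    rewrite (big_mkcond (fun s => (t <= n_rej alpha o psi s)%N)).
    rewrite [in X in _ <= X](big_mkcond (fun s => (t <= Mwalk p (Zs o psi s))%N)).
    apply: ler_sum => s _; case: ifP => h1; case: ifP => h2 //.
    by move: h2; rewrite (leq_trans h1) // nrej_le.
  have -> : \sum_(s | (t <= Mwalk p (Zs o psi s))%N) P_signs beta b Delta sigma2 s
      = \sum_(z | (t <= Mwalk p z)%N) Pq qq z.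
    rewrite [RHS](reindex_inj (@Zs_inj d o psi)) /=; apply: eq_bigr => s _.
    rewrite /Pq /P_signs [LHS](reindex_inj (@perm_inj _ o)) /=.
    apply: eq_bigr => i _; rewrite /qq ffunE.
    have := sign_prob_sum (a (o i)).
    case: (s (o i)); case: (psi (o i)) => /= e; lra.
  apply: le_trans (@dom_all R d (fun z => (t <= Mwalk p z)%N) qq (fun _ => q1) _ _ _ _) _.
  - move=> z z' hz h; apply: leq_trans h _; exact: Mwalk_mono.
  - by move=> j; rewrite (le_trans q1ge (spge _ _)) sple.
  - by move=> j; rewrite q1ge q1le.
  - by move=> j; apply: spge.
  - exact: lexx.
apply: (@le_trans _ _ (\sum_x w x * B)).
  by apply: ler_sum => x _; apply: ler_wpM2l.
by rewrite -big_distrl /= hw1 mul1r.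
Qed.
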